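(* Every RAD-AG-groupoid $S$ is right distributive, i.e. $(ab)c=(ac)(bc)$ for all $a,b,c\in S$.
   Context: A groupoid is a set $S$ with a binary operation written as juxtaposition; $ab\cdot c$ means $(ab)c$. An AG-groupoid is a groupoid satisfying the left invertive law $(ab)c=(cb)a$ for all $a,b,c\in S$. An RAD-AG-groupoid (right abelian distributive AG-groupoid) is an AG-groupoid satisfying $(ab)c=(ca)(bc)$ for all $a,b,c\in S$. *)

(* Defs.v *)
Definition left_invertive {S : Type} (op : S -> S -> S) : Prop :=
  forall a b c : S, op (op a b) c = op (op c b) a.

Definition AG_groupoid {S : Type} (op : S -> S -> S) : Prop :=
  left_invertive op.

Definition RAD_AG_groupoid {S : Type} (op : S -> S -> S) : Prop :=
  AG_groupoid op /\
  forall a b c : S, op (op a b) c = op (op c a) (op b c).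

Definition right_distributive {S : Type} (op : S -> S -> S) : Prop :=
  forall a b c : S, op (op a b) c = op (op a c) (op b c).

(* Main.v *)
Require Import Defs.

Theorem mainTheorem6 (S : Type) (op : S -> S -> S) :
  RAD_AG_groupoid op -> right_distributive op.
Proof.
  intros [LI RAD] a b c.
  unfold AG_groupoid, left_invertive in LI.
  rewrite (RAD a b c).
  rewrite (RAD c a (op b c)).
  rewrite (LI (op b c) c (op a (op b c))).
  rewrite (LI a (op b c) c).
  rewrite (LI (op c (op b c)) a (op b c)).
  symmetry. apply RAD.
Qed.
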